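(* Let $\alpha>0$, $\gamma\in(0,1)$ and let $P$ be any distribution on $\mathcal X$. Given data $x_1,\dots,x_n$ with histogram $\theta=(\theta_1,\dots,\theta_k)$, let $S=\{j:\theta_j=0\}$ and define the random vector $Z=(z_1,\dots,z_k)$ by $$z_j=\begin{cases}\theta_j & \text{if } j\in S \text{ and } 2k\le\gamma n,\\ \theta_j+\frac{2}{n\alpha}L_j & \text{otherwise,}\end{cases}$$ where $L_1,\dots,L_k$ are i.i.d. Laplace random variables with mean zero and rate one (density $\tfrac12 e^{-|x|}$), independent of the data. Then this release mechanism is $(\alpha,\gamma)$-randomly differentially private with respect to $P$.
   Context: The sample space $\mathcal X$ is partitioned into $k$ cells $B_1,\dots,B_k$; the histogram of $x_1,\dots,x_n$ is $\theta_j=\frac1n\sum_{i=1}^n\mathbf 1\{x_i\in B_j\}$. A randomized algorithm $Q_n$ assigns to each database $X\in\mathcal X^n$ a distribution $Q_n(\cdot\mid X)$ on an output space (here $\mathbb R^k$). $Q_n$ is $(\alpha,\gamma)$-randomly differentially private (RDP) with respect to $P$ if, with $X_1,\dots,X_{n+1}$ i.i.d. $\sim P$, $X=(X_1,\dots,X_{n-1},X_n)$ and $X'=(X_1,\dots,X_{n-1},X_{n+1})$, $$\mathbb P\Big(\forall \text{ measurable } B:\ e^{-\alpha}\le \tfrac{Q_n(Z\in B\mid X)}{Q_n(Z\in B\mid X')}\le e^\alpha\Big)\ge 1-\gamma,$$ the probability being over $P^{n+1}$. *)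

(* Defs.v *)
From HB Require Import structures.
From mathcomp Require Import all_boot all_order all_algebra.
From mathcomp Require Import all_classical all_reals all_analysis.
Set Implicit Arguments. Unset Strict Implicit. Unset Printing Implicit Defensive.
Import Order.TTheory GRing.Theory Num.Theory.
Local Open Scope classical_set_scope.
Local Open Scope ring_scope.

(* n-fold product P^n of a measure, as the iterated (Tonelli) integral:
   P^0 is the Dirac mass at the empty tuple and
   P^(m+1)(A) = \int P(dx) P^m({t | x :: t \in A}). *)
Fixpoint prod_meas d (T : measurableType d) (R : realType)
    (P : {measure set T -> \bar R}) (n : nat) : set (n.-tuple T) -> \bar R :=
  match n return set (n.-tuple T) -> \bar R with
  | 0 => fun A => (if `[< A [tuple] >] then 1 else 0)%:E
  | m.+1 => fun A =>
      (\int[P]_x @prod_meas d T R P m [set t : m.-tuple T | A [tuple of x :: t]])%E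
  end.

Definition laplace_pdf (R : realType) (x : R) : R := expR (- `|x|) / 2.

(* law of k i.i.d. Laplace(0,1) variables (L_1,...,L_k) on R^k = k.-tuple R *)
Fixpoint laplace_iid (R : realType) (k : nat) : set (k.-tuple R) -> \bar R :=
  match k return set (k.-tuple R) -> \bar R with
  | 0 => fun A => (if `[< A [tuple] >] then 1 else 0)%:E
  | m.+1 => fun A =>
      (\int[@lebesgue_measure R]_x
         ((laplace_pdf x)%:E * @laplace_iid R m [set t : m.-tuple R | A [tuple of x :: t]]))%E
  end.

(* histogram of x_1..x_n w.r.t. the partition given by cell : T -> 'I_k
   (B_j = cell^-1 j) *)
Definition histogram (T : Type) (R : realType) (k n : nat) (cell : T -> 'I_k)
    (x : n.-tuple T) (j : 'I_k) : R :=
  (count (fun y => cell y == j) x)%:R / n%:R.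

Definition release (T : Type) (R : realType) (k n : nat) (cell : T -> 'I_k)
    (alpha gamma : R) (x : n.-tuple T) (l : k.-tuple R) : k.-tuple R :=
  [tuple (let th := histogram R cell x j in
          if (th == 0) && ((2 * k)%:R <= gamma * n%:R)
          then th else th + 2 / (n%:R * alpha) * tnth l j) | j < k].

Definition release_mech (T : Type) (R : realType) (k n : nat) (cell : T -> 'I_k)
    (alpha gamma : R) (x : n.-tuple T) : set (k.-tuple R) -> \bar R :=
  fun B => @laplace_iid R k [set l | B (release cell alpha gamma x l)].

(* From (X_1,...,X_{n+1}): X = (X_1,...,X_{n-1},X_n), X' = (X_1,...,X_{n-1},X_{n+1}) *)
Definition db_X (T : Type) (n : nat) (w : n.+1.-tuple T) : n.-tuple T :=
  [tuple tnth w (widen_ord (leqnSn n) i) | i < n].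
Definition db_X' (T : Type) (n : nat) (w : n.+1.-tuple T) : n.-tuple T :=
  [tuple (if val i == n.-1 then tnth w ord_max else tnth w (widen_ord (leqnSn n) i))
  | i < n].

Definition RDP d (T : measurableType d) dY (Y : measurableType dY) (R : realType)
    (n : nat) (Q : n.-tuple T -> set Y -> \bar R) (alpha gamma : R)
    (P : probability T R) : Prop :=
  ((1 - gamma)%:E <=
   @prod_meas d T R P n.+1
     [set w | forall B : set Y, measurable B ->
        ((expR (- alpha))%:E * Q (db_X' w) B <= Q (db_X w) B)%E /\
        (Q (db_X w) B <= (expR alpha)%:E * Q (db_X' w) B)%E])%E.

(* Main.v *)
Require Import Defs.
From HB Require Import structures.
From mathcomp Require Import all_boot all_order all_algebra.
From mathcomp Require Import all_classical all_reals all_analysis.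
From mathcomp Require Import ring lra.
Set Implicit Arguments. Unset Strict Implicit. Unset Printing Implicit Defensive.
Import Order.TTheory GRing.Theory Num.Theory.
Local Open Scope classical_set_scope.
Local Open Scope ring_scope.


Module M0.
Import Order.TTheory GRing.Theory Num.Theory.
Import numFieldNormedType.Exports.
Local Open Scope classical_set_scope.
Local Open Scope ring_scope.
Import HBNNSimple.

Section lower.
Local Open Scope ereal_scope.
Context d (T : measurableType d) (R : realType) (mu : {measure set T -> \bar R}).

Lemma le_int (f g : T -> \bar R) : (forall x, 0 <= f x) -> (forall x, f x <= g x) ->
  \int[mu]_x f x <= \int[mu]_x g x.
Proof.
move=> f0 fg; have g0 x : 0 <= g x := le_trans (f0 x) (fg x).
rewrite !ge0_integralTE//; apply: le_ereal_sup => _ [h hf <-].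
by exists h => //= x; exact: le_trans (hf x) (fg x).
Qed.

Lemma int_scale_le (c : R) (f : T -> \bar R) : (0 < c)%R -> (forall x, 0 <= f x) ->
  \int[mu]_x (c%:E * f x) <= c%:E * \int[mu]_x f x.
Proof.
move=> c0 f0; have cf0 x : 0 <= c%:E * f x by apply: mule_ge0 => //; rewrite lee_fin ltW.
rewrite !ge0_integralTE//; apply: ge_ereal_sup => _ [h hf <-].
have ci0 : (0 <= c^-1)%R by rewrite invr_ge0 ltW.
pose h' := scale_nnsfun h ci0.
have -> : sintegral mu h = c%:E * sintegral mu h'.
  rewrite /h' /scale_nnsfun /= sintegralrM muleA -EFinM divff ?mul1e //.
  by rewrite gt_eqF.
apply: lee_wpmul2l; first by rewrite lee_fin ltW.
apply: ereal_sup_ubound; exists h' => //= x.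
rewrite EFinM; apply: (@le_trans _ _ (c^-1%:E * (c%:E * f x))).
  by apply: lee_wpmul2l; [rewrite lee_fin|exact: hf].
by rewrite muleA -EFinM mulVf ?mul1e // gt_eqF.
Qed.

End lower.

End M0.
Import M0.

Module M1.
Import Order.TTheory GRing.Theory Num.Theory.
Import numFieldNormedType.Exports.
Local Open Scope classical_set_scope.
Local Open Scope ring_scope.
Import HBNNSimple.

Section transl.
Context (R : realType) (del : R).
Definition shft (x : measurableTypeR R) : measurableTypeR R := ((x : R) - del)%R.
Lemma ms_shft : measurable_fun setT shft.
Proof. by apply: measurable_realfun.measurable_funB => //; exact: measurable_cst. Qed.

Lemma leb_transl (A : set (measurableTypeR R)) : measurable A ->
  lebesgue_measure (shft @^-1` A) = lebesgue_measure A.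
Proof.
move=> mA.
have -> : lebesgue_measure (shft @^-1` A) = pushforward lebesgue_measure (shft : _ -> measurableTypeR R) A by [].
apply/esym/lebesgue_measure_unique => //=; first exact: ms_shft.
move=> _ _ [[a b]] _ <-.
rewrite /pushforward.
have -> : shft @^-1` `]a, b]%classic = `]a + del, b + del]%classic.
  apply/seteqP; split => x /=; rewrite !in_itv /= /shft.
    by rewrite ltrBrDr lerBlDr.
  by rewrite ltrBrDr lerBlDr.
rewrite !lebesgue_measure_itv /= !lte_fin ltrD2r.
case: ifP => // _; rewrite -!EFinB; congr (_%:E); rewrite opprD addrACA subrr addr0.
by [].
Qed.

Variable h : {nnsfun measurableTypeR R >-> R}.
Definition hsh := fun x => h (shft x).
Lemma hsh_m : measurable_fun setT hsh.
Proof. exact: measurableT_comp ms_shft. Qed.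
HB.instance Definition _ := isMeasurableFun.Build _ _ _ _ hsh hsh_m.
Lemma hsh_fin : finite_set (range hsh).
Proof.
apply: sub_finite_set (fimfunP h) => _ [x _ <-]; by exists (shft x).
Qed.
HB.instance Definition _ := FiniteImage.Build _ _ hsh hsh_fin.
Lemma hsh_ge0 x : 0 <= hsh x. Proof. exact: fun_ge0. Qed.
HB.instance Definition _ := isNonNegFun.Build _ _ hsh hsh_ge0.
Definition hsh_nn : {nnsfun measurableTypeR R >-> R} := hsh.

Lemma sintegral_hsh : sintegral lebesgue_measure hsh_nn = sintegral lebesgue_measure h.
Proof.
rewrite /sintegral; apply: eq_fsbigr => r _; congr (_ * _)%E.
rewrite -(leb_transl (measurable_sfunP h (measurable_set1 r))).
by [].
Qed.
End transl.

Lemma int_transl (R : realType) (del : R) (F : R -> \bar R) : (forall x, 0 <= F x)%E ->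
  (\int[@lebesgue_measure R]_x F (x + del)%R <= \int[@lebesgue_measure R]_x F x)%E.
Proof.
move=> F0; rewrite !ge0_integralTE//; apply: ge_ereal_sup => _ [h hF <-].
rewrite -(sintegral_hsh del h); apply: ereal_sup_ubound; exists (hsh_nn del h) => //= x.
by rewrite /hsh /shft; have := hF (x - del); rewrite subrK.
Qed.

End M1.
Import M1.

Module M2.
Import Order.TTheory GRing.Theory Num.Theory.
Import numFieldNormedType.Exports.
Local Open Scope classical_set_scope.
Local Open Scope ring_scope.

Section lap.
Context (R : realType).

Lemma pdf_ge0 (x : R) : 0 <= laplace_pdf x.
Proof. by rewrite /laplace_pdf divr_ge0 // expR_ge0. Qed.

Lemma pdf_shift (x del : R) : laplace_pdf x <= expR `|del| * laplace_pdf (x + del).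
Proof.
rewrite /laplace_pdf mulrA ler_pM2r ?invr_gt0 // -expRD ler_expR.
by rewrite lerBrDl lerBlDr addrC (le_trans (ler_normD _ _)) // normrN addrC.
Qed.

Lemma laplace_ge0 m (A : set (m.-tuple R)) : (0 <= @laplace_iid R m A)%E.
Proof.
elim: m A => [|m IH] A /=; first by case: ifP => _; rewrite lee_fin.
apply: integral_ge0 => x _; apply: mule_ge0 => //; rewrite lee_fin; exact: pdf_ge0.
Qed.

Definition tshift m (l del : m.-tuple R) : m.-tuple R :=
  [tuple tnth l i + tnth del i | i < m].

Lemma tshift_cons m (x d0 : R) (t d' : m.-tuple R) :
  tshift [tuple of x :: t] [tuple of d0 :: d'] = [tuple of (x + d0) :: tshift t d'].
Proof.
apply: eq_from_tnth => i; rewrite tnth_mktuple.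
case: (unliftP ord0 i) => [j ->|->]; first by rewrite !tnthS tnth_mktuple.
by rewrite !tnth0.
Qed.

Lemma laplace_shift m (A : set (m.-tuple R)) (del : m.-tuple R) :
  (@laplace_iid R m [set l | A (tshift l del)] <=
   (expR (\sum_(i < m) `|tnth del i|))%:E * @laplace_iid R m A)%E.
Proof.
elim: m A del => [|m IH] A del.
  rewrite big_ord0 expR0 mul1e /=.
  have -> : tshift [tuple] del = [tuple] by rewrite tuple0.
  by [].
case/tupleP: del => d0 d'.
rewrite big_ord_recl tnth0.
under eq_bigr do rewrite tnthS.
set S := \sum_(i < m) _.
rewrite /=.
set g := fun y : R => @laplace_iid R m [set t : m.-tuple R | A [tuple of y :: t]].
have g0 y : (0 <= g y)%E by exact: laplace_ge0.
set F := fun y : R => ((laplace_pdf y)%:E * g y)%E.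
have F0 y : (0 <= F y)%E by apply: mule_ge0 => //; rewrite lee_fin pdf_ge0.
have E0 : (0 < expR (`|d0| + S))%R by exact: expR_gt0.
apply: (@le_trans _ _ (\int[lebesgue_measure]_x ((expR (`|d0| + S))%:E * F (x + d0)%R))%E).
  apply: le_int => x.
    by apply: mule_ge0; [rewrite lee_fin pdf_ge0|exact: laplace_ge0].
  have -> : [set t : m.-tuple R | A (tshift [tuple of x :: t] [tuple of d0 :: d'])] =
      [set t : m.-tuple R | A [tuple of (x + d0) :: tshift t d']].
    by apply/funext => t /=; congr (A _); exact: tshift_cons.
  have IHx := IH [set t : m.-tuple R | A [tuple of (x + d0) :: t]] d'.
  apply: (@le_trans _ _ ((laplace_pdf x)%:E * ((expR S)%:E * g (x + d0)%R)))%E.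
    by apply: lee_wpmul2l IHx; rewrite lee_fin pdf_ge0.
  have key : (laplace_pdf x * expR S <= expR (`|d0| + S) * laplace_pdf (x + d0)%R)%R.
    rewrite expRD; have := pdf_shift x d0; have := expR_ge0 S.
    move: (laplace_pdf x) (laplace_pdf (x + d0)) (expR S) (expR `|d0|) => p q eS e1 hS H.
    by rewrite mulrAC; apply: ler_wpM2r.
  rewrite /F !muleA -!EFinM; apply: lee_wpmul2r; first exact: g0.
  by rewrite lee_fin.
have := int_scale_le (@lebesgue_measure R) (f := fun x => F (x + d0)%R) E0 (fun x => F0 _).
move/le_trans; apply.
apply: lee_wpmul2l; first by rewrite lee_fin ltW.
exact: int_transl.
Qed.
End lap.

End M2.
Import M2.

Module M3.
Import Order.TTheory GRing.Theory Num.Theory.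
Import numFieldNormedType.Exports.
Local Open Scope classical_set_scope.
Local Open Scope ring_scope.

Section mech.
Context (R : realType) (T : Type) (k n : nat) (cell : T -> 'I_k) (alpha gamma : R).
Hypothesis n0 : (0 < n)%N.
Hypothesis a0 : 0 < alpha.

Lemma mech_le (x y : n.-tuple T) (B : set (k.-tuple R)) :
  (forall j, (histogram R cell x j == 0) && ((2 * k)%:R <= gamma * n%:R) =
             (histogram R cell y j == 0) && ((2 * k)%:R <= gamma * n%:R)) ->
  \sum_(j < k) `|histogram R cell y j - histogram R cell x j| <= 2 / n%:R ->
  (release_mech cell alpha gamma y B <= (expR alpha)%:E * release_mech cell alpha gamma x B)%E.
Proof.
move=> hflag hl1.
set del := [tuple (histogram R cell y j - histogram R cell x j) * (n%:R * alpha / 2) | j < k].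
have nz : n%:R * alpha != 0 by rewrite mulf_neq0 // ?pnatr_eq0 -?lt0n // gt_eqF.
have E l : release cell alpha gamma y l = release cell alpha gamma x (tshift l del).
  apply: eq_from_tnth => j; rewrite !tnth_mktuple.
  rewrite /= -hflag.
  case: ifP => [/andP[/eqP hx hC]|_].
    by have := hflag j; rewrite hx hC eqxx => /esym/andP[/eqP -> _].
  field; by rewrite gt_eqF // pnatr_eq0 -lt0n.
rewrite /release_mech.
have -> : [set l | B (release cell alpha gamma y l)] =
          [set l | [set l | B (release cell alpha gamma x l)] (tshift l del)].
  by apply/funext => l /=; rewrite E.
apply: le_trans (laplace_shift _ _) _.
apply: lee_wpmul2r; first exact: laplace_ge0.
rewrite lee_fin ler_expR.
under eq_bigr do rewrite /del tnth_mktuple normrM.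
rewrite -mulr_suml (ger0_norm (_ : 0 <= n%:R * alpha / 2)); last first.
  by rewrite divr_ge0 // mulr_ge0 // ltW.
apply: le_trans (ler_wpM2r _ hl1) _; first by rewrite divr_ge0 // mulr_ge0 // ltW.
have nn : n%:R != 0 :> R by rewrite pnatr_eq0 -lt0n.
by rewrite le_eqVlt; apply/orP; left; apply/eqP; field.
Qed.
End mech.

End M3.
Import M3.

Module M4.
Import Order.TTheory GRing.Theory Num.Theory.
Import numFieldNormedType.Exports.
Local Open Scope classical_set_scope.
Local Open Scope ring_scope.

Section tsum.
Context (R : realType) (X : finType).

Lemma sum_tuple0 (F : 0.-tuple X -> R) : \sum_c F c = F [tuple].
Proof. by rewrite (big_pred1 [tuple]) // => c /=; apply/esym/eqP; apply: val_inj; case: c => -[]. Qed.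

Lemma sum_tupleS m (F : m.+1.-tuple X -> R) :
  \sum_c F c = \sum_x \sum_(c : m.-tuple X) F [tuple of x :: c].
Proof.
rewrite pair_big /=.
rewrite (reindex (fun p : X * m.-tuple X => [tuple of p.1 :: p.2])) //=.
exists (fun t => (thead t, [tuple of behead t])) => [[x c] _|t _] /=.
  by congr pair; apply: val_inj.
by rewrite -tuple_eta.
Qed.

Lemma prod_sum m (F : nat -> X -> R) :
  \sum_(c : m.-tuple X) \prod_(i < m) F i (tnth c i) = \prod_(i < m) \sum_x F i x.
Proof.
elim: m F => [|m IH] F; first by rewrite sum_tuple0 !big_ord0.
rewrite sum_tupleS big_ord_recl mulr_suml; apply: eq_bigr => x _.
under eq_bigr do rewrite big_ord_recl tnth0.
rewrite -mulr_sumr; congr (_ * _).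
under eq_bigr do under eq_bigr do rewrite tnthS.
exact: (IH (fun i => F i.+1)).
Qed.
End tsum.

Section cellprob.
Context (d : measure_display) (T : measurableType d) (R : realType) (P : probability T R)
  (k : nat) (cell : T -> 'I_k).
Hypothesis hcell : forall j : 'I_k, measurable (cell @^-1` [set j]).

Definition pc (j : 'I_k) : R := fine (P (cell @^-1` [set j])).

Lemma pcE j : P (cell @^-1` [set j]) = (pc j)%:E.
Proof. by rewrite /pc fineK // fin_num_measure. Qed.

Lemma pc_ge0 j : 0 <= pc j.
Proof. by rewrite /pc fine_ge0. Qed.

Lemma int_cell (h : 'I_k -> R) : (forall j, 0 <= h j) ->
  (\int[P]_x (h (cell x))%:E = (\sum_(j < k) h j * pc j)%:E)%E.
Proof.
move=> h0.
have E x : (h (cell x))%:E = (\sum_(j < k) ((h j)%:E * (\1_(cell @^-1` [set j]) x)%:E))%E.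
  rewrite (bigD1 (cell x)) //= indicE mem_set // mule1 big1 ?adde0 // => j hj.
  rewrite indicE memNset ?mule0 // => /= e.
  by rewrite e eqxx in hj.
transitivity (\int[P]_x (\sum_(j < k) ((h j)%:E * (\1_(cell @^-1` [set j]) x)%:E)))%E.
  by apply: eq_integral => x _; exact: E.
rewrite ge0_integral_sum //; last first.
  move=> j x _; apply: mule_ge0; rewrite lee_fin //; exact: indic_ge0.
  move=> j; apply/measurable_realfun.measurable_EFinP.
  apply: measurable_realfun.measurable_funM; first exact: measurable_cst.
  exact/measurable_realfun.measurable_indic.
rewrite -sumEFin; apply: eq_bigr => j _.
rewrite ge0_integralZl_EFin //.
  rewrite integral_indic // setIT.
  by rewrite EFinM /pc fineK // fin_num_measure.
apply/measurable_realfun.measurable_EFinP; exact: measurable_realfun.measurable_indic.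
Qed.

Lemma prod_meas_ge0 m (A : set (m.-tuple T)) : (0 <= @prod_meas d T R P m A)%E.
Proof.
elim: m A => [|m IH] A /=; first by case: ifP => _; rewrite lee_fin.
by apply: integral_ge0 => x _; exact: IH.
Qed.

Lemma prod_meas_le m (A B : set (m.-tuple T)) : A `<=` B ->
  (@prod_meas d T R P m A <= @prod_meas d T R P m B)%E.
Proof.
elim: m A B => [|m IH] A B AB /=.
  case: (asboolP (A [tuple])) => hA; case: (asboolP (B [tuple])) => hB //.
  by case: hB; exact: AB.
apply: le_int => x; first exact: prod_meas_ge0.
by apply: IH => t /=; exact: AB.
Qed.

Lemma prod_formula m (Phi : pred (m.-tuple 'I_k)) :
  @prod_meas d T R P m [set w | Phi (map_tuple cell w)] =
  (\sum_(c : m.-tuple 'I_k | Phi c) \prod_(i < m) pc (tnth c i))%:E.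
Proof.
elim: m Phi => [|m IH] Phi /=.
  rewrite big_mkcond sum_tuple0 big_ord0.
  have -> : map_tuple cell [tuple] = [tuple] by apply: val_inj.
  by case: (asboolP (Phi [tuple])) => [->|/negP/negbTE ->].
pose h (j : 'I_k) := \sum_(c : m.-tuple 'I_k | Phi [tuple of j :: c]) \prod_(i < m) pc (tnth c i).
transitivity (\int[P]_x (h (cell x))%:E)%E.
  apply: eq_integral => x _.
  rewrite -(IH (fun c => Phi [tuple of cell x :: c])); congr prod_meas.
  by apply/funext => t /=; congr (Phi _); apply: val_inj.
rewrite int_cell; last first.
  by move=> j; apply: sumr_ge0 => c _; apply: prodr_ge0 => i _; exact: pc_ge0.
congr (_%:E); rewrite [RHS]big_mkcond sum_tupleS; apply: eq_bigr => j _.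
rewrite mulrC mulr_sumr [LHS]big_mkcond; apply: eq_bigr => c _ /=.
rewrite big_ord_recl tnth0; case: ifP => _ //.
by congr (_ * _); apply: eq_bigr => i _; rewrite tnthS.
Qed.

Lemma pc_sum1 : \sum_(j < k) pc j = 1.
Proof.
have := @int_cell (fun _ => 1) (fun _ => ler01).
rewrite integral_cst // mul1e.
rewrite [X in X = _ -> _](_ : _ = 1%E); last exact: probability_setT.
by under eq_bigr do rewrite mul1r; move=> [->].
Qed.
End cellprob.

End M4.
Import M4.

Module M5.
Import Order.TTheory GRing.Theory Num.Theory.
Local Open Scope ring_scope.

Section comb.
Context (R : realType) (k : nat) (p : 'I_k -> R).
Hypothesis p0 : forall j, 0 <= p j.
Hypothesis p1 : \sum_(j < k) p j = 1.

Lemma p_le1 j : p j <= 1.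
Proof. by rewrite -p1 (bigD1 j) //= lerDl sumr_ge0. Qed.

Lemma bern_aux (x : R) m : 0 <= x <= 1 -> (1 - x) ^+ m * (1 + m%:R * x) <= 1.
Proof.
move=> /andP[x0 x1]; elim: m => [|m IH]; first by rewrite expr0 mul0r addr0 mulr1.
apply: le_trans IH; rewrite exprS [(1 - x) * _]mulrC -mulrA.
apply: ler_wpM2l; first by rewrite exprn_ge0 // subr_ge0.
rewrite -natr1; have : 0 <= m%:R :> R by []; nra.
Qed.

Lemma term_bound (x : R) m : 0 <= x <= 1 -> m.+1%:R * (x * (1 - x) ^+ m) <= 1.
Proof.
move=> hx; apply: le_trans (bern_aux m hx).
case/andP: hx => x0 x1.
rewrite [X in X <= _](_ : _ = (1 - x) ^+ m * (m.+1%:R * x)); last by ring.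
apply: ler_wpM2l; first by rewrite exprn_ge0 // subr_ge0.
rewrite -natr1 mulrDl mul1r; have : 0 <= m%:R :> R by []; nra.
Qed.

Definition bad n' (q : 'I_n'.+2) (c : n'.+2.-tuple 'I_k) : bool :=
  [forall i : 'I_n'.+2, (i < n')%N ==> (tnth c i != tnth c q)].

Lemma sum_neq j : \sum_x p x * (x != j)%:R = 1 - p j.
Proof.
rewrite -[X in _ = X - _]p1 (bigD1 j) //= [in RHS](bigD1 j) //= eqxx mulr0 add0r addrAC subrr add0r.
by apply: eq_bigr => x hx; rewrite hx mulr1.
Qed.

Lemma sum_eq j : \sum_x p x * (x == j)%:R = p j.
Proof.
by rewrite (bigD1 j) //= eqxx mulr1 big1 ?addr0 // => x /negbTE ->; rewrite mulr0.
Qed.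

Lemma bad_bound n' (q : 'I_n'.+2) : (n' <= q)%N ->
  \sum_(c | bad q c) \prod_(i < n'.+2) p (tnth c i) <= \sum_j p j * (1 - p j) ^+ n'.
Proof.
move=> hq.
pose G (j : 'I_k) (i : nat) (x : 'I_k) := p x *
  (if (i < n')%N then (x != j)%:R else if i == q then (x == j)%:R else 1).
have G0 j i x : 0 <= G j i x.
  by rewrite /G; apply: mulr_ge0 => //; case: ifP => _ //; case: ifP.
apply: (@le_trans _ _ (\sum_(c : n'.+2.-tuple 'I_k) \sum_j \prod_(i < n'.+2) G j i (tnth c i))).
  rewrite big_mkcond; apply: ler_sum => c _.
  case: ifP => hb; last by apply: sumr_ge0 => j _; apply: prodr_ge0.
  rewrite (bigD1 (tnth c q)) //=; apply: ler_wpDr; first by apply: sumr_ge0 => j _; apply: prodr_ge0.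
  rewrite le_eqVlt; apply/orP; left; apply/eqP; apply: eq_bigr => i _; rewrite /G.
  case: ifP => hi; first by rewrite (implyP (forallP hb i) hi) /= mulr1n mulr1.
  case: ifP => [/eqP hiq|]; last by rewrite mulr1.
  by rewrite (val_inj hiq) eqxx /= mulr1n mulr1.
rewrite exchange_big /=; apply: ler_sum => j _.
rewrite prod_sum big_ord_recr big_ord_recr /=.
under eq_bigr => i _ do rewrite /G /= ltn_ord sum_neq.
rewrite prodr_const card_ord /G /= ltnn ltnNge leqnSn /=.
have hqq : (q == n' :> nat) || (q == n'.+1 :> nat).
  have hq2 := ltn_ord q; move: hq; rewrite leq_eqVlt => /orP[/eqP<-|hq1]; first by rewrite eqxx.
  by rewrite [q == n'.+1 :> nat]eqn_leq hq1 -ltnS hq2 orbT.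
have s1 : \sum_(x < k) p x * 1 = 1 by under eq_bigr do rewrite mulr1; exact: p1.
case/orP: hqq => /eqP ->.
  rewrite eqxx [n'.+1 == n']eq_sym (ltn_eqF (ltnSn n')) sum_eq s1 mulr1 mulrC.
  by [].
rewrite eqxx (ltn_eqF (ltnSn n')) sum_eq s1 mulr1 mulrC.
by [].
Qed.

Definition PhiG n' (C : bool) (c : n'.+2.-tuple 'I_k) : bool :=
  ~~ C || (~~ bad (inord n') c && ~~ bad ord_max c).


Lemma good_bound n' (gamma : R) (C : bool) : 0 < gamma ->
  (C -> (2 * k)%:R <= gamma * n'.+1%:R) ->
  1 - gamma <= \sum_(c : n'.+2.-tuple 'I_k | PhiG C c) \prod_(i < n'.+2) p (tnth c i).
Proof.
move=> g0 hCg.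
have W0 (c : n'.+2.-tuple 'I_k) : 0 <= \prod_(i < n'.+2) p (tnth c i) by apply: prodr_ge0.
have tot : \sum_(c : n'.+2.-tuple 'I_k) \prod_(i < n'.+2) p (tnth c i) = 1.
  have H := prod_sum n'.+2 (fun _ : nat => p); simpl in H.
  by rewrite H p1 prodr_const expr1n.
case hC : C; last first.
  rewrite /PhiG /= tot; lra.
have {hCg} hCg := hCg hC.
move: tot; rewrite (bigID (@PhiG n' true)) /= => tot.
suff : \sum_(c | ~~ PhiG true c) \prod_(i < n'.+2) p (tnth c i) <= gamma by lra.
set S := \sum_j p j * (1 - p j) ^+ n'.
apply: (@le_trans _ _ (\sum_(c | bad (inord n') c) \prod_(i < n'.+2) p (tnth c i) +
                       \sum_(c | bad ord_max c) \prod_(i < n'.+2) p (tnth c i))).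
  rewrite big_mkcond [X in _ <= X + _]big_mkcond [X in _ <= _ + X]big_mkcond -big_split /=.
  apply: ler_sum => c _.
  rewrite /PhiG /= negb_and !negbK.
  have := W0 c; case: (bad (inord n') c); case: (bad ord_max c) => /= w0; lra.
have b1 : \sum_(c | bad (inord n') c) \prod_(i < n'.+2) p (tnth c i) <= S.
  by apply: bad_bound; rewrite inordK.
have b2 : \sum_(c | bad ord_max c) \prod_(i < n'.+2) p (tnth c i) <= S.
  by apply: bad_bound => /=.
have hS : n'.+1%:R * S <= k%:R.
  rewrite /S mulr_sumr; apply: le_trans (_ : \sum_(j < k) (1 : R) <= _).
    apply: ler_sum => j _; apply: term_bound; rewrite p0 /=; exact: p_le1.
  by rewrite sumr_const card_ord.
have n0 : 0 < n'.+1%:R :> R by [].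
move: hCg; rewrite natrM => hCg.
nra.
Qed.
End comb.

End M5.
Import M5.

Module M6.
Import Order.TTheory GRing.Theory Num.Theory.
Local Open Scope ring_scope.

Lemma cnt (T : Type) n (f : 'I_n -> T) (a : pred T) :
  count a [tuple f i | i < n] = (\sum_(i < n) a (f i))%N.
Proof.
rewrite /= count_map -sum1_count big_enum_cond /= big_mkcond /=.
by apply: eq_bigr => i _; case: (a (f i)).
Qed.

Section hist.
Context (R : realType) (T : Type) (k n' : nat) (cell : T -> 'I_k) (w : n'.+2.-tuple T).

Definition sw (j : 'I_k) : nat :=
  (\sum_(i < n') (cell (tnth w (widen_ord (leqnSn _) (widen_ord (leqnSn _) i))) == j))%N.

Lemma cntX j : count (fun y => cell y == j) (db_X w) =
  (sw j + (cell (tnth w (inord n')) == j))%N.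
Proof.
rewrite /db_X cnt big_ord_recr /=; congr (_ + _)%N.
by congr (cell (tnth w _) == j); apply: val_inj; rewrite /= inordK.
Qed.

Lemma cntX' j : count (fun y => cell y == j) (db_X' w) =
  (sw j + (cell (tnth w ord_max) == j))%N.
Proof.
rewrite /db_X' cnt big_ord_recr /= eqxx; congr (_ + _)%N.
by apply: eq_bigr => i _; rewrite (ltn_eqF (ltn_ord i)).
Qed.

Lemma sw_pos (q : 'I_n'.+2) : ~~ bad q (map_tuple cell w) -> sw (cell (tnth w q)) != 0%N.
Proof.
move=> /forallPn [i]; rewrite negb_imply negbK => /andP[hi /eqP e].
rewrite !tnth_map in e.
rewrite /sw (bigD1 (Ordinal hi)) //=.
have -> : widen_ord (leqnSn n'.+1) (widen_ord (leqnSn n') (Ordinal hi)) = i by apply: val_inj.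
by rewrite e eqxx.
Qed.

Lemma flagsN (hb1 : ~~ bad (inord n') (map_tuple cell w)) (hb2 : ~~ bad ord_max (map_tuple cell w)) j :
  (count (fun y => cell y == j) (db_X w) == 0%N) = (count (fun y => cell y == j) (db_X' w) == 0%N).
Proof.
rewrite cntX cntX' !addn_eq0.
have [s0|] := eqVneq (sw j) 0%N; last by [].
have e1 : (cell (tnth w (inord n')) == j) = false.
  by apply/negP => /eqP e; move: (sw_pos hb1); rewrite e s0.
have e2 : (cell (tnth w ord_max) == j) = false.
  by apply/negP => /eqP e; move: (sw_pos hb2); rewrite e s0.
by rewrite e1 e2.
Qed.

Lemma hist0 m (x : m.+1.-tuple T) j :
  (histogram R cell x j == 0) = (count (fun y => cell y == j) x == 0%N).
Proof.
by rewrite /histogram mulf_eq0 invr_eq0 !pnatr_eq0 orbF.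
Qed.

Lemma sum_ind (a : 'I_k) : \sum_(j < k) ((a == j)%:R : R) = 1.
Proof.
by rewrite (bigD1 a) //= eqxx big1 ?addr0 // => j /negbTE; rewrite eq_sym => ->.
Qed.

Lemma hist_l1 :
  \sum_(j < k) `|histogram R cell (db_X' w) j - histogram R cell (db_X w) j| <= 2 / n'.+1%:R.
Proof.
have E j : histogram R cell (db_X' w) j - histogram R cell (db_X w) j =
    (((cell (tnth w ord_max) == j)%:R - (cell (tnth w (inord n')) == j)%:R) / n'.+1%:R).
  by rewrite /histogram cntX cntX' !natrD -mulrBl; congr (_ * _); ring.
under eq_bigr do rewrite E normrM.
rewrite -mulr_suml ger0_norm ?invr_ge0 // ler_pM2r ?invr_gt0 ?ltr0n //.
apply: le_trans (_ : \sum_(j < k) (((cell (tnth w ord_max) == j)%:R : R) +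
                                   (cell (tnth w (inord n')) == j)%:R) <= _).
  apply: ler_sum => j _; apply: le_trans (ler_normB _ _) _.
  by rewrite !ger0_norm.
by rewrite big_split /= !sum_ind.
Qed.
End hist.

End M6.
Import M6.

Unset Implicit Arguments. Set Strict Implicit. Set Printing Implicit Defensive.

Theorem proposition5p1 (R : realType) (d : measure_display) (T : measurableType d)
    (k n : nat) (cell : T -> 'I_k) (alpha gamma : R) (P : probability T R) :
  (forall j : 'I_k, measurable (cell @^-1` [set j])) ->
  (0 < n)%N -> 0 < alpha -> 0 < gamma < 1 ->
  @RDP d T _ (k.-tuple R) R n (release_mech cell alpha gamma) alpha gamma P.
Proof.
move=> hcell n0 a0 /andP[g0 g1].
case: n n0 => [//|n'] n0.
rewrite /RDP.
set C := (2 * k)%:R <= gamma * n'.+1%:R.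
apply: (@le_trans _ _ (@prod_meas d T R P n'.+2 [set w | PhiG C (map_tuple cell w)])).
  rewrite prod_formula // lee_fin.
  apply: good_bound => //.
  - exact: pc_ge0.
  - exact: pc_sum1.
apply: prod_meas_le => w /= hPhi B mB.
have hf : forall j, (histogram R cell (db_X w) j == 0) && C =
                    (histogram R cell (db_X' w) j == 0) && C.
  move=> j; move: hPhi; rewrite /PhiG; have [_|_] := boolP C; rewrite /= ?andbT ?andbF // => /andP[hb1 hb2].
  by rewrite !hist0 (flagsN hb1 hb2).
have l1 := hist_l1 R cell w.
have l1' : \sum_(j < k) `|histogram R cell (db_X w) j - histogram R cell (db_X' w) j| <= 2 / n'.+1%:R.
  by under eq_bigr do rewrite distrC.
split.
  have h1 := mech_le n0 a0 B hf l1.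
  apply: le_trans (lee_wpmul2l _ h1) _; first by rewrite lee_fin expR_ge0.
  by rewrite muleA -EFinM -expRD addNr expR0 mul1e.
have hf' : forall j, (histogram R cell (db_X' w) j == 0) && C =
                     (histogram R cell (db_X w) j == 0) && C by move=> j; rewrite hf.
have h2 := mech_le n0 a0 B hf' l1'.
exact: h2.
Qed.
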